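(* Let $(G,\theta_G,(-1)^F_G)$ and $(H,\theta_H,(-1)^F_H)$ be fermionic groups. Equip the space $G\otimes H:=(G\times H)/\langle((-1)^F_G,(-1)^F_H)\rangle$, with elements written $g\otimes h$, with the following data: \begin{itemize} \item the product $(g_1\otimes h_1)(g_2\otimes h_2)=((-1)^F_G)^{\theta_G(g_2)\theta_H(h_1)}\,g_1g_2\otimes h_1h_2$; \item the element $1\otimes(-1)^F_H=(-1)^F_G\otimes 1$; \item the map $\theta(g\otimes h)=\theta_G(g)+\theta_H(h)$. \end{itemize} Then the product is well defined, and with these data $G\otimes H$ is a fermionic group.
   Context: A fermionic group is a topological group $G$ together with a central element $(-1)^F\in G$ with $((-1)^F)^2=1$ and a continuous homomorphism $\theta:G\to\mathbb{Z}_2=\{0,1\}$, written additively, satisfying $\theta((-1)^F)=0$. *)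

(* Defs.v *)
From HB Require Import structures.
From mathcomp Require Import all_boot all_order all_algebra.
From mathcomp Require Import all_classical all_reals all_analysis.
From mathcomp Require Import generic_quotient.

Set Implicit Arguments.
Unset Strict Implicit.
Unset Printing Implicit Defensive.

Local Open Scope classical_set_scope.

(* Z_2 = {0,1} written additively is modelled by bool with addition addb
   (xor), 0 = false, 1 = true; bool carries the discrete topology. *)

Record is_topological_group (T : topologicalType)
  (mul : T -> T -> T) (one : T) (inv : T -> T) : Prop := {
  tg_mulA : forall x y z, mul x (mul y z) = mul (mul x y) z;
  tg_mul1g : forall x, mul one x = x;
  tg_mulg1 : forall x, mul x one = x;
  tg_mulVg : forall x, mul (inv x) x = one;
  tg_mulgV : forall x, mul x (inv x) = one;
  tg_mul_cont : continuous (fun p : T * T => mul p.1 p.2);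
  tg_inv_cont : continuous inv
}.

Record is_fermionic_group (T : topologicalType)
  (mul : T -> T -> T) (one : T) (inv : T -> T)
  (fer : T) (theta : T -> bool) : Prop := {
  fg_top : is_topological_group mul one inv;
  fg_fer_central : forall x, mul fer x = mul x fer;
  fg_fer_sq : mul fer fer = one;
  fg_theta_morph : forall x y, theta (mul x y) = addb (theta x) (theta y);
  fg_theta_cont : continuous theta;
  fg_theta_fer : theta fer = false
}.

(* The quotient of G x H by the subgroup generated by c = (ferG, ferH):
   p ~ q  iff  c^n p = c^m q for some n m.  (Under the fermionic group
   axioms this is exactly the coset relation of <c> = {1, c}; stated this
   way it is an equivalence relation without any hypothesis.) *)
Local Open Scope quotient_scope.
Section FermQuot.
Variables (G H : topologicalType) (mulG : G -> G -> G) (mulH : H -> H -> H)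
  (ferG : G) (ferH : H).

Definition cmul (p : G * H) : G * H := (mulG ferG p.1, mulH ferH p.2).

Definition ferm_rel (p q : G * H) : bool :=
  `[< exists n m : nat, iter n cmul p = iter m cmul q >].

Lemma ferm_rel_refl : reflexive ferm_rel.
Proof. by move=> p; apply/asboolP; exists 0%N, 0%N. Qed.

Lemma ferm_rel_sym : symmetric ferm_rel.
Proof.
move=> p q; apply/asboolP/asboolP => -[n [m e]]; by exists m, n.
Qed.

Lemma ferm_rel_trans : transitive ferm_rel.
Proof.
move=> q p r /asboolP [n [m e1]] /asboolP [k [l e2]]; apply/asboolP.
exists (n + k)%N, (m + l)%N.
by rewrite addnC iterD e1 -iterD addnC iterD e2 -iterD.
Qed.

Canonical ferm_equiv := EquivRel ferm_rel ferm_rel_refl ferm_rel_sym ferm_rel_trans.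

Definition ferm_tensor := quotient_topology {eq_quot ferm_equiv}.

Definition ferm_pi (g : G) (h : H) : ferm_tensor :=
  \pi_({eq_quot ferm_equiv}) (g, h).

End FermQuot.

(* Main.v *)
Require Import Defs.
From HB Require Import structures.
From mathcomp Require Import all_boot all_order all_algebra.
From mathcomp Require Import all_classical all_reals all_analysis.
From mathcomp Require Import generic_quotient.
Set Implicit Arguments.
Unset Strict Implicit.
Unset Printing Implicit Defensive.
Local Open Scope classical_set_scope.
Local Open Scope quotient_scope.

Lemma cont_pair (X Y Z : topologicalType) (u : X -> Y) (v : X -> Z) :
  continuous u -> continuous v -> continuous (fun x => (u x, v x)).
Proof. by move=> cu cv x; apply: cvg_pair; [exact: cu|exact: cv]. Qed.

Lemma cont_fst (Y Z : topologicalType) : continuous (@fst Y Z).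
Proof. by move=> x; exact: cvg_fst. Qed.
Lemma cont_snd (Y Z : topologicalType) : continuous (@snd Y Z).
Proof. by move=> x; exact: cvg_snd. Qed.

Lemma cont_comp (X Y Z : topologicalType) (f : X -> Y) (g : Y -> Z) :
  continuous f -> continuous g -> continuous (fun x => g (f x)).
Proof. by move=> cf cg x; apply: (continuous_comp (cf x) (cg (f x))). Qed.

Lemma bool_near (X : topologicalType) (b : X -> bool) (x : X) :
  continuous b -> \forall y \near x, b y = b x.
Proof.
move=> cb; have := cb x [set b x]; apply.
by rewrite nbhs_principalE; apply/principal_filterP.
Qed.

Lemma cont_loc (X Y : topologicalType) (f : X -> Y) :
  (forall x, exists g : X -> Y, [/\ {for x, continuous g}, g x = f x &
      \forall y \near x, f y = g y]) -> continuous f.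
Proof.
move=> h x; have [g [cg gx ne]] := h x.
have cg' : g @ nbhs x --> g x := cg.
rewrite gx in cg'; apply: cvg_trans cg'; apply: near_eq_cvg.
by apply: filterS ne => y ->.
Qed.

Definition open_map (X Y : topologicalType) (p : X -> Y) :=
  forall U, open U -> open (p @` U).

Lemma cont_open_surj (X Y Z : topologicalType) (p : X -> Y) (F : Y -> Z) :
  open_map p -> (forall y, exists x, p x = y) ->
  continuous (fun x => F (p x)) -> continuous F.
Proof.
move=> op sp /continuousP cFp; apply/continuousP => A oA.
have -> : F @^-1` A = p @` ((fun x => F (p x)) @^-1` A).
  apply/seteqP; split => y /=.
    by move=> Ay; have [x px] := sp y; exists x => //=; rewrite px.
  by case=> x /= Ax <-.
exact/op/cFp.
Qed.

Lemma open_map_pair (X1 X2 Y1 Y2 : topologicalType) (p1 : X1 -> Y1) (p2 : X2 -> Y2) :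
  open_map p1 -> open_map p2 -> open_map (fun x => (p1 x.1, p2 x.2)).
Proof.
move=> o1 o2 W; rewrite !openE => oW _ [[a b] Wab <-].
have [[A B] /= [Aa Bb] ABW] := oW _ Wab.
rewrite /interior.
have Ai : nbhs a A° by exact: nbhs_interior.
have Bi : nbhs b B° by exact: nbhs_interior.
exists (p1 @` A°, p2 @` B°) => /=.
  split.
    apply: open_nbhs_nbhs; split; first by apply: o1; exact: open_interior.
    by exists a => //; exact: nbhs_singleton.
  apply: open_nbhs_nbhs; split; first by apply: o2; exact: open_interior.
  by exists b => //; exact: nbhs_singleton.
move=> [y1 y2] [/= [x1 Ax1 <-] [x2 Bx2 <-]].
exists (x1, x2) => //; apply: ABW; split; exact: interior_subset.
Qed.

Section FG.
Variables (T : topologicalType) (mul : T -> T -> T) (one : T) (inv : T -> T)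
  (fer : T) (theta : T -> bool).
Variable (fT : is_fermionic_group mul one inv fer theta).

Let mA := tg_mulA (fg_top fT).
Let m1 := tg_mul1g (fg_top fT).
Let mr1 := tg_mulg1 (fg_top fT).
Let mV := tg_mulVg (fg_top fT).
Let mv := tg_mulgV (fg_top fT).
Let fC := fg_fer_central fT.
Let f2 := fg_fer_sq fT.
Let tM := fg_theta_morph fT.
Let tf := fg_theta_fer fT.

Lemma th1 : theta one = false.
Proof. by move: (tM one one); rewrite m1; case: (theta one). Qed.

Lemma thV g : theta (inv g) = theta g.
Proof.
by move: (tM (inv g) g); rewrite mV th1; case: (theta g); case: (theta (inv g)).
Qed.

Lemma thf g : theta (mul fer g) = theta g.
Proof. by rewrite tM tf. Qed.

Definition sg (b : bool) := if b then fer else one.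

Lemma sgC b x : mul (sg b) x = mul x (sg b).
Proof. by case: b => /=; [exact: fC | rewrite m1 mr1]. Qed.

Lemma sgM a b x : mul (sg a) (mul (sg b) x) = mul (sg (addb a b)) x.
Proof. by rewrite mA; case: a; case: b => /=; rewrite ?f2 ?m1 ?mr1. Qed.

Lemma ths b x : theta (mul (sg b) x) = theta x.
Proof. by case: b => /=; rewrite ?thf ?m1. Qed.

Lemma sgR b x y : mul x (mul (sg b) y) = mul (sg b) (mul x y).
Proof. by rewrite mA -sgC -mA. Qed.

Lemma sgL b x y : mul (mul (sg b) x) y = mul (sg b) (mul x y).
Proof. by rewrite mA. Qed.

Lemma inv_uniq x y : mul y x = one -> y = inv x.
Proof. by move=> e; rewrite -[y]mr1 -(mv x) mA e m1. Qed.

Lemma fg_invf g : inv (mul fer g) = mul fer (inv g).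
Proof.
symmetry; apply: inv_uniq.
by rewrite -mA (mA (inv g)) -fC -mA mA f2 m1 mV.
Qed.

Lemma mulf2 g : mul fer (mul fer g) = g.
Proof. by rewrite mA f2 m1. Qed.

Lemma fR x y : mul x (mul fer y) = mul fer (mul x y).
Proof. by rewrite mA -fC -mA. Qed.

Lemma cont_mul2 (X : topologicalType) (u v : X -> T) :
  continuous u -> continuous v -> continuous (fun x => mul (u x) (v x)).
Proof.
move=> cu cv; exact: (cont_comp (cont_pair cu cv) (tg_mul_cont (fg_top fT))).
Qed.

Lemma cont_inv (X : topologicalType) (u : X -> T) :
  continuous u -> continuous (fun x => inv (u x)).
Proof. move=> cu; exact: (cont_comp cu (tg_inv_cont (fg_top fT))). Qed.

Lemma cont_sg (X : topologicalType) (b : X -> bool) (k : X -> T) :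
  continuous b -> continuous k -> continuous (fun x => mul (sg (b x)) (k x)).
Proof.
move=> cb ck; apply: cont_loc => x.
exists (fun y => mul (sg (b x)) (k y)); split => //.
  by apply: (cont_mul2 (@cst_continuous _ _ _) ck).
by apply: filterS (bool_near x cb) => y ->.
Qed.

End FG.

Lemma cont_bool2 (X : topologicalType) (op : bool -> bool -> bool) (b1 b2 : X -> bool) :
  continuous b1 -> continuous b2 -> continuous (fun x => op (b1 x) (b2 x)).
Proof.
move=> c1 c2; apply: cont_loc => x.
exists (fun _ => op (b1 x) (b2 x)); split => //.
  exact: cst_continuous.
by apply: filterS2 (bool_near x c1) (bool_near x c2) => y -> ->.
Qed.

Section Main.
Variables (G H : topologicalType)
  (mulG : G -> G -> G) (oneG : G) (invG : G -> G) (ferG : G) (thetaG : G -> bool)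
  (mulH : H -> H -> H) (oneH : H) (invH : H -> H) (ferH : H) (thetaH : H -> bool).
Variables (fG : is_fermionic_group mulG oneG invG ferG thetaG)
          (fH : is_fermionic_group mulH oneH invH ferH thetaH).

Local Notation Q := (ferm_tensor mulG mulH ferG ferH).
Definition piQ (p : G * H) : Q := ferm_pi mulG mulH ferG ferH p.1 p.2.
Local Notation c := (cmul mulG mulH ferG ferH).
Local Notation sG := (sg oneG ferG).

Let mGA := tg_mulA (fg_top fG).
Let mG1 := tg_mul1g (fg_top fG).
Let mGr1 := tg_mulg1 (fg_top fG).
Let mGV := tg_mulVg (fg_top fG).
Let mGv := tg_mulgV (fg_top fG).
Let tGM := fg_theta_morph fG.
Let mHA := tg_mulA (fg_top fH).
Let mH1 := tg_mul1g (fg_top fH).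
Let mHr1 := tg_mulg1 (fg_top fH).
Let mHV := tg_mulVg (fg_top fH).
Let mHv := tg_mulgV (fg_top fH).
Let tHM := fg_theta_morph fH.

Lemma cK p : c (c p) = p.
Proof. by case: p => g h; rewrite /cmul /= (mulf2 fG) (mulf2 fH). Qed.

Lemma iter_c n p : iter n c p = if odd n then c p else p.
Proof. by elim: n => //= n ->; case: (odd n) => //=; rewrite cK. Qed.

Lemma eqQ p q : piQ p = piQ q <-> q = p \/ q = c p.
Proof.
rewrite /piQ /ferm_pi -!surjective_pairing; split.
  move/eqmodP => /asboolP [n [m]]; rewrite !iter_c.
  case: (odd n); case: (odd m) => e.
  - by left; rewrite -[q]cK -e cK.
  - by right.
  - by right; rewrite e cK.
  - by left.
case=> ->; apply/eqmodP/asboolP; first by exists 0%N, 0%N.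
by exists 1%N, 0%N.
Qed.

Lemma piQ_c p : piQ (c p) = piQ p.
Proof. by apply/eqQ; right; rewrite cK. Qed.

Lemma piQ_repr (x : Q) : piQ (repr x) = x.
Proof. by rewrite /piQ /ferm_pi -surjective_pairing; exact: reprK. Qed.

Lemma piQ_surj (x : Q) : exists p, piQ p = x.
Proof. by exists (repr x); exact: piQ_repr. Qed.

Lemma repr_cases p : repr (piQ p) = p \/ repr (piQ p) = c p.
Proof. by apply/eqQ; rewrite piQ_repr. Qed.

Definition tmul (p q : G * H) : G * H :=
  (mulG (sG (thetaG q.1 && thetaH p.2)) (mulG p.1 q.1), mulH p.2 q.2).
Definition invP (p : G * H) : G * H :=
  (mulG (sG (thetaG p.1 && thetaH p.2)) (invG p.1), invH p.2).
Definition thetaP (p : G * H) : bool := addb (thetaG p.1) (thetaH p.2).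

Lemma tmul_cl p q : tmul (c p) q = c (tmul p q).
Proof.
case: p q => [g1 h1] [g2 h2]; rewrite /tmul /cmul /= !(thf fG, thf fH).
by rewrite -mGA -mHA (fR fG).
Qed.

Lemma tmul_cr p q : tmul p (c q) = c (tmul p q).
Proof.
case: p q => [g1 h1] [g2 h2]; rewrite /tmul /cmul /= !(thf fG, thf fH).
by rewrite !(fR fG) (fR fH).
Qed.

Lemma invP_c p : invP (c p) = c (invP p).
Proof.
case: p => [g h]; rewrite /invP /cmul /= !(thf fG, thf fH).
by rewrite (fg_invf fG) (fg_invf fH) (fR fG).
Qed.

Lemma thetaP_c p : thetaP (c p) = thetaP p.
Proof. by case: p => g h; rewrite /thetaP /cmul /= (thf fG) (thf fH). Qed.

Definition mulQ (x y : Q) : Q := piQ (tmul (repr x) (repr y)).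
Definition invQ (x : Q) : Q := piQ (invP (repr x)).
Definition thetaQ (x : Q) : bool := thetaP (repr x).

Lemma mulQ_pi p q : mulQ (piQ p) (piQ q) = piQ (tmul p q).
Proof.
rewrite /mulQ; case: (repr_cases p) => ->; case: (repr_cases q) => ->;
by rewrite ?tmul_cl ?tmul_cr ?piQ_c.
Qed.

Lemma invQ_pi p : invQ (piQ p) = piQ (invP p).
Proof. by rewrite /invQ; case: (repr_cases p) => ->; rewrite ?invP_c ?piQ_c. Qed.

Lemma thetaQ_pi p : thetaQ (piQ p) = thetaP p.
Proof. by rewrite /thetaQ; case: (repr_cases p) => ->; rewrite ?thetaP_c. Qed.


Let oneP : G * H := (oneG, oneH).
Let ferP : G * H := (oneG, ferH).

Lemma tmulA p q r : tmul p (tmul q r) = tmul (tmul p q) r.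
Proof.
case: p q r => [g1 h1] [g2 h2] [g3 h3]; rewrite /tmul /=; congr (_, _); last exact: mHA.
rewrite (ths fG) !tGM tHM (sgR fG) (sgL fG) !(sgM fG) [mulG g1 (mulG g2 g3)]mGA.
congr (mulG (sG _) _).
by case: (thetaG g2); case: (thetaG g3); case: (thetaH h1); case: (thetaH h2).
Qed.

Lemma tmul1 p : tmul oneP p = p.
Proof.
by case: p => g h; rewrite /tmul /= (th1 fH) andbF /= !mG1 mH1.
Qed.

Lemma tmulr1 p : tmul p oneP = p.
Proof. by case: p => g h; rewrite /tmul /= (th1 fG) /= mG1 mGr1 mHr1. Qed.

Lemma tmulV p : tmul (invP p) p = oneP.
Proof.
case: p => g h; rewrite /tmul /invP /= (thV fH) (sgL fG) (sgM fG) addbb /= mG1 mGV.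
by rewrite mHV.
Qed.

Lemma tmulv p : tmul p (invP p) = oneP.
Proof.
case: p => g h; rewrite /tmul /invP /= (ths fG) (thV fG) [mulG g (mulG _ _)](sgR fG) (sgM fG) addbb /=.
by rewrite mG1 mGv mHv.
Qed.

Lemma tmulfC p : tmul ferP p = tmul p ferP.
Proof.
case: p => g h; rewrite /tmul /= (fg_theta_fer fH) (th1 fG) andbF /=.
by rewrite !mG1 mGr1 (fg_fer_central fH).
Qed.

Lemma tmulff : tmul ferP ferP = oneP.
Proof. by rewrite /tmul /= (th1 fG) /= !mG1 (fg_fer_sq fH). Qed.

Lemma thetaP_mul p q : thetaP (tmul p q) = addb (thetaP p) (thetaP q).
Proof.
case: p q => [g1 h1] [g2 h2]; rewrite /thetaP /tmul /= (ths fG) tGM tHM.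
by case: (thetaG g1); case: (thetaG g2); case: (thetaH h1); case: (thetaH h2).
Qed.

Lemma c_cont : continuous c.
Proof.
apply: cont_pair.
  exact: (cont_mul2 fG (@cst_continuous _ _ _) (@cont_fst _ _)).
exact: (cont_mul2 fH (@cst_continuous _ _ _) (@cont_snd _ _)).
Qed.

Lemma piQ_cont : continuous piQ.
Proof.
exact: (cont_comp (cont_pair (@cont_fst _ _) (@cont_snd _ _)) pi_continuous).
Qed.

Lemma piQ_open : open_map piQ.
Proof.
move=> U oU; rewrite /open /= /quotient_open.
have -> : \pi_Q @^-1` (piQ @` U) = U `|` c @^-1` U.
  apply/seteqP; split => y /=.
    case=> x Ux; rewrite [\pi_Q y](_ : _ = piQ y); last first.
      by rewrite /piQ /ferm_pi -surjective_pairing.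
    move/eqQ => [->|->]; first by left.
    by right; rewrite cK.
  rewrite [\pi_Q y](_ : _ = piQ y); last by rewrite /piQ /ferm_pi -surjective_pairing.
  case=> Uy; first by exists y.
  by exists (c y) => //; rewrite piQ_c.
apply: openU => //; move/continuousP: c_cont; exact.
Qed.


Lemma cont_eq (X Y : topologicalType) (f g : X -> Y) :
  (forall x, f x = g x) -> continuous g -> continuous f.
Proof. by move=> e; rewrite (funext e). Qed.

Lemma tmul_cont : continuous (fun x : (G * H) * (G * H) => tmul x.1 x.2).
Proof.
have c11 : continuous (fun x : (G * H) * (G * H) => x.1.1).
  exact: (cont_comp (@cont_fst _ _) (@cont_fst _ _)).
have c12 : continuous (fun x : (G * H) * (G * H) => x.1.2).
  exact: (cont_comp (@cont_fst _ _) (@cont_snd _ _)).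
have c21 : continuous (fun x : (G * H) * (G * H) => x.2.1).
  exact: (cont_comp (@cont_snd _ _) (@cont_fst _ _)).
have c22 : continuous (fun x : (G * H) * (G * H) => x.2.2).
  exact: (cont_comp (@cont_snd _ _) (@cont_snd _ _)).
apply: cont_pair; last exact: (cont_mul2 fH c12 c22).
apply: (cont_sg fG (b := fun x : (G * H) * (G * H) => thetaG x.2.1 && thetaH x.1.2)
  (k := fun x => mulG x.1.1 x.2.1)); last exact: (cont_mul2 fG c11 c21).
apply: (cont_bool2 (op := andb) (b1 := fun x : (G * H) * (G * H) => thetaG x.2.1)
  (b2 := fun x : (G * H) * (G * H) => thetaH x.1.2)).
  exact: (cont_comp c21 (fg_theta_cont fG)).
exact: (cont_comp c12 (fg_theta_cont fH)).
Qed.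

Lemma invP_cont : continuous invP.
Proof.
apply: cont_pair; last exact: (cont_inv fH (@cont_snd _ _)).
apply: (cont_sg fG (b := fun x : G * H => thetaG x.1 && thetaH x.2)
  (k := fun x => invG x.1)); last exact: (cont_inv fG (@cont_fst _ _)).
apply: (cont_bool2 (op := andb) (b1 := fun x : G * H => thetaG x.1)
  (b2 := fun x : G * H => thetaH x.2)).
  exact: (cont_comp (@cont_fst _ _) (fg_theta_cont fG)).
exact: (cont_comp (@cont_snd _ _) (fg_theta_cont fH)).
Qed.

Lemma thetaP_cont : continuous thetaP.
Proof.
apply: (cont_bool2 (op := addb) (b1 := fun x : G * H => thetaG x.1)
  (b2 := fun x : G * H => thetaH x.2)).
  exact: (cont_comp (@cont_fst _ _) (fg_theta_cont fG)).
exact: (cont_comp (@cont_snd _ _) (fg_theta_cont fH)).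
Qed.

Lemma main_sec :
  let Q := ferm_tensor mulG mulH ferG ferH in
  let pi := ferm_pi mulG mulH ferG ferH in
  pi oneG ferH = pi ferG oneH /\
  exists (mul : Q -> Q -> Q) (one : Q) (inv : Q -> Q) (theta : Q -> bool),
    (forall g1 h1 g2 h2,
        mul (pi g1 h1) (pi g2 h2) =
        pi (mulG (if thetaG g2 && thetaH h1 then ferG else oneG) (mulG g1 g2))
           (mulH h1 h2)) /\
    (forall g h, theta (pi g h) = addb (thetaG g) (thetaH h)) /\
    is_fermionic_group mul one inv (pi oneG ferH) theta.
Proof.
move=> Q pi; split.
  apply: (proj2 (eqQ (oneG, ferH) (ferG, oneH))); right.
  by rewrite /cmul /= mGr1 (fg_fer_sq fH).
exists mulQ, (piQ (oneG, oneH)), invQ, thetaQ.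
split; first by move=> g1 h1 g2 h2; exact: (mulQ_pi (g1, h1) (g2, h2)).
split; first by move=> g h; exact: (thetaQ_pi (g, h)).
have ferQ : pi oneG ferH = piQ (oneG, ferH) by [].
rewrite ferQ.
constructor.
- constructor.
  + move=> x y z; case: (piQ_surj x) => p <-; case: (piQ_surj y) => q <-.
    by case: (piQ_surj z) => r <-; rewrite !mulQ_pi tmulA.
  + by move=> x; case: (piQ_surj x) => p <-; rewrite mulQ_pi tmul1.
  + by move=> x; case: (piQ_surj x) => p <-; rewrite mulQ_pi tmulr1.
  + by move=> x; case: (piQ_surj x) => p <-; rewrite invQ_pi mulQ_pi tmulV.
  + by move=> x; case: (piQ_surj x) => p <-; rewrite invQ_pi mulQ_pi tmulv.
  + apply: (cont_open_surj (p := fun x : (G * H) * (G * H) => (piQ x.1, piQ x.2))).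
    * exact: (open_map_pair piQ_open piQ_open).
    * move=> [y1 y2]; case: (piQ_surj y1) => p1 <-; case: (piQ_surj y2) => p2 <-.
      by exists (p1, p2).
    * apply: (cont_eq (g := fun x => piQ (tmul x.1 x.2))).
        by move=> x /=; rewrite mulQ_pi.
      exact: (cont_comp tmul_cont piQ_cont).
  + apply: (cont_open_surj (p := piQ)); [exact: piQ_open | exact: piQ_surj |].
    apply: (cont_eq (g := fun x => piQ (invP x))); first by move=> x; rewrite invQ_pi.
    exact: (cont_comp invP_cont piQ_cont).
- by move=> x; case: (piQ_surj x) => p <-; rewrite !mulQ_pi tmulfC.
- by rewrite mulQ_pi tmulff.
- move=> x y; case: (piQ_surj x) => p <-; case: (piQ_surj y) => q <-.
  by rewrite mulQ_pi !thetaQ_pi thetaP_mul.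
- apply: (cont_open_surj (p := piQ)); [exact: piQ_open | exact: piQ_surj |].
  apply: (cont_eq (g := thetaP)); first by move=> x; rewrite thetaQ_pi.
  exact: thetaP_cont.
- by rewrite thetaQ_pi /thetaP /= (th1 fG) (fg_theta_fer fH).
Qed.

End Main.

Theorem mainTheorem3 (G H : topologicalType)
  (mulG : G -> G -> G) (oneG : G) (invG : G -> G) (ferG : G) (thetaG : G -> bool)
  (mulH : H -> H -> H) (oneH : H) (invH : H -> H) (ferH : H) (thetaH : H -> bool) :
  is_fermionic_group mulG oneG invG ferG thetaG ->
  is_fermionic_group mulH oneH invH ferH thetaH ->
  let Q := ferm_tensor mulG mulH ferG ferH in
  let pi := ferm_pi mulG mulH ferG ferH in
  pi oneG ferH = pi ferG oneH /\
  exists (mul : Q -> Q -> Q) (one : Q) (inv : Q -> Q) (theta : Q -> bool),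
    (forall g1 h1 g2 h2,
        mul (pi g1 h1) (pi g2 h2) =
        pi (mulG (if thetaG g2 && thetaH h1 then ferG else oneG) (mulG g1 g2))
           (mulH h1 h2)) /\
    (forall g h, theta (pi g h) = addb (thetaG g) (thetaH h)) /\
    is_fermionic_group mul one inv (pi oneG ferH) theta.
Proof. by move=> fG fH; exact: (main_sec fG fH). Qed.
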